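(* Let $Y\subset D_2(H)$ be the subgroup generated by all $T(a_i,a_j;a_k,a_l)$, all $⑦_{i,j,k,l}:=T(a_i,a_j;b_k,a_l)$ ($1\le i,j,k,l\le g$) and all $⑧_{i,j}:=a_i\odot a_j$ ($i\ne j$), and let $P:=\operatorname{Ker}(\operatorname{Tr}^{as}|_Y:Y\to\Lambda^2(H/2H))$ (the image lies in the span of the $a_i\wedge a_j$ mod 2). Then $P$ is generated by: all $T(a_i,a_j;a_k,a_l)$; all $⑦_{i,j,k,l}$ with $k\notin\{i,j,l\}$; all $⑦_{i,k,k,i}$ with $i\ne k$; and, for both choices of sign, the elements $$⑦_{i,k,k,m}\pm⑦_{m,k,k,i},\qquad ⑦_{i,k,k,l}\pm⑦_{i,k',k',l},\qquad ⑦_{i,k,k,l}\pm⑧_{i,l},$$ where $i\notin\{k,k',l\}$ and $m\ne k$.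
   Context: Let $g\ge 2$, $\Sigma_{g,1}$ a compact connected oriented surface of genus $g$ with one boundary component, $H=H_1(\Sigma_{g,1};\mathbb Z)$ with intersection form $\omega$, $\mathcal L(H)$ the free Lie ring on $H$ embedded in $T(H)$ via $[x,y]=x\otimes y-y\otimes x$, $D_2(H):=\ker(H\otimes\mathcal L_3(H)\to\mathcal L_4(H),\ h\otimes u\mapsto[h,u])$. Fix a symplectic basis $(a_1,\dots,a_g,b_1,\dots,b_g)$ of $H$ ($\omega(a_i,b_j)=\delta_{ij}$, $\omega(a_i,a_j)=\omega(b_i,b_j)=0$). For $a,b,c,d\in H$, $T(a,b;c,d):=a\otimes[b,[c,d]]+b\otimes[[c,d],a]+c\otimes[d,[a,b]]+d\otimes[[a,b],c]$ and $a\odot b:=a\otimes[b,[a,b]]+b\otimes[[a,b],a]$ (both in $D_2(H)$). $\operatorname{Tr}^{as}:D_2(H)\to\Lambda^2(H/2H)$ is the homomorphism $T(a,b;c,d)\mapsto\omega(a,d)\,b\wedge c+\omega(a,c)\,b\wedge d+\omega(b,d)\,a\wedge c+\omega(b,c)\,a\wedge d$, $a\odot b\mapsto(1+\omega(a,b))\,a\wedge b$ (coefficients mod 2). *)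

(* Defs.v *)
From mathcomp Require Import all_boot all_order all_algebra.
Set Implicit Arguments. Unset Strict Implicit. Unset Printing Implicit Defensive.
Import GRing.Theory.
Local Open Scope ring_scope.

(* H = H_1(Sigma_{g,1}; Z) = Z^(g+g), coordinates indexed by 'I_(g+g):
   index [lshift g i] is the coefficient of a_(i+1), [rshift g i] that of b_(i+1). *)
Definition Hg (g : nat) := {ffun 'I_(g + g) -> int}.

Definition avec (g : nat) (i : 'I_g) : Hg g := [ffun j => ((j == lshift g i) : nat)%:R].
Definition bvec (g : nat) (i : 'I_g) : Hg g := [ffun j => ((j == rshift g i) : nat)%:R].

Definition omega (g : nat) (x y : Hg g) : int :=
  \sum_(i < g) (x (lshift g i) * y (rshift g i) - x (rshift g i) * y (lshift g i)).

(* H^{(x)4} = Z^((g+g)^4); H (x) L_3(H) and D_2(H) are subgroups of it via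
   L(H) -> T(H), [x,y] = x(x)y - y(x)x (injective, H free). *)
Definition idx4 (g : nat) := ('I_(g + g) * 'I_(g + g) * 'I_(g + g) * 'I_(g + g))%type.
Definition T4 (g : nat) := {ffun idx4 g -> int}.

Definition t4 (g : nat) (x y z w : Hg g) : T4 g :=
  [ffun t => let: (i, j, k, l) := t in x i * y j * z k * w l].

(* lb3 h y z w = h (x) [y,[z,w]] *)
Definition lb3 (g : nat) (h y z w : Hg g) : T4 g :=
  t4 h y z w - t4 h y w z - t4 h z w y + t4 h w z y.

(* T(a,b;c,d) = a(x)[b,[c,d]] + b(x)[[c,d],a] + c(x)[d,[a,b]] + d(x)[[a,b],c] *)
Definition Tel (g : nat) (a b c d : Hg g) : T4 g :=
  lb3 a b c d - lb3 b a c d + lb3 c d a b - lb3 d c a b.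

(* a (.) b = a(x)[b,[a,b]] + b(x)[[a,b],a] *)
Definition odot (g : nat) (a b : Hg g) : T4 g := lb3 a b a b - lb3 b a a b.

Inductive gen (A : zmodType) (G : A -> Prop) : A -> Prop :=
| gen0 : gen G 0
| genG x : G x -> gen G x
| genB x y : gen G x -> gen G y -> gen G (x - y).

Definition HL3 (g : nat) (x : T4 g) : Prop :=
  gen (fun t => exists h y z w : Hg g, t = lb3 h y z w) x.

(* D_2(H) = ker(H (x) L_3 -> L_4, h(x)u |-> [h,u] = h(x)u - u(x)h) *)
Definition D2 (g : nat) (x : T4 g) : Prop :=
  HL3 x /\ forall i j k l, x (i, j, k, l) = x (l, i, j, k).

(* Lambda^2(H/2H) modelled (isomorphically) by alternating (g+g)x(g+g) matrices
   over F_2, with u /\ v |-> u v^T - v u^T. *)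
Definition L2 (g : nat) := 'M['F_2]_(g + g).

Definition wedge (g : nat) (u v : Hg g) : L2 g :=
  \matrix_(i, j) ((u i)%:~R * (v j)%:~R - (u j)%:~R * (v i)%:~R).

Definition is_Tras (g : nat) (Tr : T4 g -> L2 g) : Prop :=
  (forall x y, D2 x -> D2 y -> Tr (x + y) = Tr x + Tr y) /\
  (forall a b c d : Hg g,
      Tr (Tel a b c d) =
        (omega a d)%:~R *: wedge b c + (omega a c)%:~R *: wedge b d
      + (omega b d)%:~R *: wedge a c + (omega b c)%:~R *: wedge a d) /\
  (forall a b : Hg g, Tr (odot a b) = (1 + omega a b)%:~R *: wedge a b).

Definition c7 (g : nat) (i j k l : 'I_g) : T4 g :=
  Tel (avec i) (avec j) (bvec k) (avec l).
Definition c8 (g : nat) (i j : 'I_g) : T4 g := odot (avec i) (avec j).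

Definition Ygen (g : nat) (x : T4 g) : Prop :=
  (exists i j k l : 'I_g, x = Tel (avec i) (avec j) (avec k) (avec l)) \/
  (exists i j k l : 'I_g, x = c7 i j k l) \/
  (exists i j : 'I_g, i != j /\ x = c8 i j).

Definition Yset (g : nat) (x : T4 g) : Prop := gen (@Ygen g) x.

Definition Pgen (g : nat) (x : T4 g) : Prop :=
  (exists i j k l : 'I_g, x = Tel (avec i) (avec j) (avec k) (avec l)) \/
  (exists i j k l : 'I_g, [/\ k != i, k != j, k != l & x = c7 i j k l]) \/
  (exists i k : 'I_g, i != k /\ x = c7 i k k i) \/
  (exists i k m : 'I_g, [/\ i != k, m != k &
       (x = c7 i k k m + c7 m k k i \/ x = c7 i k k m - c7 m k k i)]) \/
  (exists i k k' l : 'I_g, [/\ i != k, i != k', i != l &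
       (x = c7 i k k l + c7 i k' k' l \/ x = c7 i k k l - c7 i k' k' l)]) \/
  (exists i k l : 'I_g, [/\ i != k, i != l &
       (x = c7 i k k l + c8 i l \/ x = c7 i k k l - c8 i l)]).

(* Main.v *)
Require Import Defs.
From mathcomp Require Import all_boot all_order all_algebra ring.
Set Implicit Arguments. Unset Strict Implicit. Unset Printing Implicit Defensive.
Import GRing.Theory.
Local Open Scope ring_scope.

Section GenLemmas.
Variables (A : zmodType) (G : A -> Prop).
Lemma gen_opp x : gen G x -> gen G (- x).
Proof. by move=> h; rewrite -sub0r; apply: genB => //; apply: gen0. Qed.
Lemma gen_add x y : gen G x -> gen G y -> gen G (x + y).
Proof. by move=> hx hy; rewrite -(opprK y); apply: genB => //; apply: gen_opp. Qed.
Lemma gen_sum (I : finType) (P : pred I) (F : I -> A) :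
  (forall i, P i -> gen G (F i)) -> gen G (\sum_(i | P i) F i).
Proof.
move=> h; apply: (big_ind (gen G)); [exact: gen0| exact: gen_add|exact: h].
Qed.
End GenLemmas.

Lemma gen_mono (A : zmodType) (G G' : A -> Prop) x :
  (forall y, G y -> gen G' y) -> gen G x -> gen G' x.
Proof. by move=> h; elim=> [|y /h|y z _ ? _ ?]; [exact: gen0| |exact: genB]. Qed.

Lemma Tel_jac g (A B C D : Hg g) : Tel A B C D = Tel A D C B - Tel B D C A.
Proof. apply/ffunP => [[[[i j] k] l]]; rewrite /Tel /lb3 /t4 !ffunE /=; ring. Qed.
Lemma Tel_swap g (A B C D : Hg g) : Tel B A C D = - Tel A B C D.
Proof. apply/ffunP => [[[[i j] k] l]]; rewrite /Tel /lb3 /t4 !ffunE /=; ring. Qed.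
Lemma Tel_aa g (A C D : Hg g) : Tel A A C D = 0.
Proof. apply/ffunP => [[[[i j] k] l]]; rewrite /Tel /lb3 /t4 !ffunE /=; ring. Qed.
Lemma odotC g (A B : Hg g) : odot A B = odot B A.
Proof. apply/ffunP => [[[[i j] k] l]]; rewrite /odot /lb3 /t4 !ffunE /=; ring. Qed.

Lemma D20 g : D2 (0 : T4 g).
Proof. by split; [apply: gen0| move=> *; rewrite !ffunE]. Qed.
Lemma D2B g (x y : T4 g) : D2 x -> D2 y -> D2 (x - y).
Proof.
move=> [hx cx] [hy cy]; split; first exact: genB.
by move=> i j k l; rewrite !ffunE cx cy.
Qed.
Lemma D2N g (x : T4 g) : D2 x -> D2 (- x).
Proof. by move=> h; rewrite -sub0r; apply: D2B => //; apply: D20. Qed.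
Lemma D2D g (x y : T4 g) : D2 x -> D2 y -> D2 (x + y).
Proof. by move=> hx hy; rewrite -(opprK y); apply: D2B => //; apply: D2N. Qed.

Lemma HL3_lb3 g (h y z w : Hg g) : HL3 (lb3 h y z w).
Proof. by apply: genG; exists h, y, z, w. Qed.

Lemma D2_Tel g (A B C D : Hg g) : D2 (Tel A B C D).
Proof.
split.
  rewrite /HL3 /Tel; apply: genB; [apply: gen_add; [apply: genB|]|]; exact: HL3_lb3.
by move=> i j k l; rewrite /Tel /lb3 /t4 !ffunE /=; ring.
Qed.
Lemma D2_odot g (A B : Hg g) : D2 (odot A B).
Proof.
split; first by apply: genB; apply: HL3_lb3.
by move=> i j k l; rewrite /odot /lb3 /t4 !ffunE /=; ring.
Qed.

Lemma avecE g (i : 'I_g) j : avec i (lshift g j) = ((j == i) : nat)%:R.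
Proof. by rewrite ffunE eq_lshift. Qed.
Lemma avecR g (i : 'I_g) j : avec i (rshift g j) = 0.
Proof. by rewrite ffunE eq_rlshift. Qed.
Lemma bvecE g (i : 'I_g) j : bvec i (rshift g j) = ((j == i) : nat)%:R.
Proof. by rewrite ffunE eq_rshift. Qed.
Lemma bvecL g (i : 'I_g) j : bvec i (lshift g j) = 0.
Proof. by rewrite ffunE eq_lrshift. Qed.

Lemma omega_aa g (i j : 'I_g) : omega (avec i) (avec j) = 0.
Proof. by rewrite /omega big1 // => k _; rewrite !avecR !mulr0 !mul0r subrr. Qed.

Lemma omega_ab g (i k : 'I_g) : omega (avec i) (bvec k) = ((i == k) : nat)%:R.
Proof.
rewrite /omega (bigD1 i) //= big1 => [|j /negbTE hj].
  by rewrite avecE bvecE avecR eqxx mul0r subr0 mul1r addr0.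
by rewrite avecE hj avecR !mul0r subrr.
Qed.

Lemma F2_cases (x : 'F_2) : x = 0 \/ x = 1.
Proof. case: x => [[|[|n]]] H; [left|right|]; by [apply: val_inj|]. Qed.
Lemma F2_opp (x : 'F_2) : - x = x.
Proof. by case: (F2_cases x) => ->; [rewrite oppr0|apply: val_inj]. Qed.
Lemma F2_add (x : 'F_2) : x + x = 0.
Proof. by rewrite -{1}(F2_opp x) addNr. Qed.

Lemma M2_add n (M : 'M['F_2]_n) : M + M = 0.
Proof. by apply/matrixP => i j; rewrite !mxE F2_add. Qed.

Lemma wedgeC g (u v : Hg g) : wedge v u = wedge u v.
Proof. by apply/matrixP => i j; rewrite !mxE -[LHS]F2_opp opprB (mulrC (u j)%:~R) (mulrC (u i)%:~R). Qed.
Lemma wedge_id g (u : Hg g) : wedge u u = 0.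
Proof. by apply/matrixP => i j; rewrite !mxE mulrC subrr. Qed.

Section Tr.
Variables (g : nat) (Tr : T4 g -> L2 g) (HTr : is_Tras Tr).

Lemma Tr0 : Tr 0 = 0.
Proof.
case: HTr => Hadd _.
have := Hadd 0 0 (@D20 g) (@D20 g); rewrite addr0 => /(congr1 (fun z => z - Tr 0)).
by rewrite addrK subrr => ->.
Qed.
Lemma TrB x y : D2 x -> D2 y -> Tr (x - y) = Tr x - Tr y.
Proof.
case: HTr => Hadd _ hx hy.
by rewrite -[in Tr x](subrK y x) (Hadd _ _ (D2B hx hy) hy) addrK.
Qed.
Lemma TrD x y : D2 x -> D2 y -> Tr (x + y) = Tr x + Tr y.
Proof. by case: HTr => H _; apply: H. Qed.

Lemma Tr_c7 (i j k l : 'I_g) : Tr (c7 i j k l) =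
  (if i == k then wedge (avec j) (avec l) else 0) +
  (if j == k then wedge (avec i) (avec l) else 0).
Proof.
case: HTr => _ [HT _]; rewrite /c7 HT !omega_aa !omega_ab !scale0r add0r addr0.
by case: (i == k); case: (j == k); rewrite /= ?scale1r ?scale0r.
Qed.
Lemma Tr_c8 (i j : 'I_g) : Tr (c8 i j) = wedge (avec i) (avec j).
Proof. by case: HTr => _ [_ Ho]; rewrite /c8 Ho omega_aa addr0 scale1r. Qed.
Lemma Tr_Ta (i j k l : 'I_g) : Tr (Tel (avec i) (avec j) (avec k) (avec l)) = 0.
Proof. by case: HTr => _ [HT _]; rewrite HT !omega_aa !scale0r !addr0. Qed.
End Tr.

Section Main.
Variables (g : nat) (Tr : T4 g -> L2 g) (HTr : is_Tras Tr).

Lemma Y_c7 (i j k l : 'I_g) : Yset (c7 i j k l).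
Proof. by apply: genG; right; left; exists i, j, k, l. Qed.
Lemma Y_c8 (i j : 'I_g) : i != j -> Yset (c8 i j).
Proof. by move=> h; apply: genG; right; right; exists i, j. Qed.
Lemma Y_Ta (i j k l : 'I_g) : Yset (Tel (avec i) (avec j) (avec k) (avec l)).
Proof. by apply: genG; left; exists i, j, k, l. Qed.

Lemma D2_c7 (i j k l : 'I_g) : D2 (c7 i j k l). Proof. exact: D2_Tel. Qed.
Lemma D2_c8 (i j : 'I_g) : D2 (c8 i j). Proof. exact: D2_odot. Qed.

Lemma Tr_c7kk (i k l : 'I_g) : i != k -> Tr (c7 i k k l) = wedge (avec i) (avec l).
Proof. by move=> h; rewrite (Tr_c7 HTr) (negbTE h) eqxx add0r. Qed.

Lemma pm_case x (a b : T4 g) (ta : L2 g) : (x = a + b \/ x = a - b) ->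
  D2 a -> D2 b -> Tr a = ta -> Tr b = ta ->
  Yset a -> Yset b -> D2 x /\ Tr x = 0 /\ Yset x.
Proof.
move=> [->|->] da db ha hb ya yb.
  by split; [exact: D2D|split; [rewrite (TrD HTr) // ha hb M2_add|exact: gen_add]].
by split; [exact: D2B|split; [rewrite (TrB HTr) // ha hb subrr|exact: genB]].
Qed.

Lemma Pgen_prop x : Pgen x -> D2 x /\ Tr x = 0 /\ Yset x.
Proof.
case=> [H|[H|[H|[H|[H|H]]]]].
- move: H => [i [j [k [l ->]]]].
  by split; [exact: D2_Tel|split; [exact: (Tr_Ta HTr)|exact: Y_Ta]].
- move: H => [i [j [k [l [hi hj hl ->]]]]].
  split; [exact: D2_c7|split; [|exact: Y_c7]].
  by rewrite (Tr_c7 HTr) eq_sym (negbTE hi) eq_sym (negbTE hj) addr0.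
- move: H => [i [k [hik ->]]].
  split; [exact: D2_c7|split; [|exact: Y_c7]].
  by rewrite (Tr_c7kk _ hik) wedge_id.
- move: H => [i [k [m [hik hmk hx]]]].
  have e2 : Tr (c7 m k k i) = wedge (avec i) (avec m) by rewrite (@Tr_c7kk m k i hmk) wedgeC.
  exact: (pm_case hx (@D2_c7 _ _ _ _) (@D2_c7 _ _ _ _) (@Tr_c7kk i k m hik) e2 (@Y_c7 _ _ _ _) (@Y_c7 _ _ _ _)).
- move: H => [i [k [k' [l [hik hik' hil hx]]]]].
  exact: (pm_case hx (@D2_c7 _ _ _ _) (@D2_c7 _ _ _ _) (@Tr_c7kk i k l hik) (@Tr_c7kk i k' l hik') (@Y_c7 _ _ _ _) (@Y_c7 _ _ _ _)).
- move: H => [i [k [l [hik hil hx]]]].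
  exact: (pm_case hx (@D2_c7 _ _ _ _) (@D2_c8 _ _) (@Tr_c7kk i k l hik) (Tr_c8 HTr i l) (@Y_c7 _ _ _ _) (@Y_c8 _ _ hil)).
Qed.

Lemma genP_prop x : gen (@Pgen g) x -> D2 x /\ Tr x = 0 /\ Yset x.
Proof.
elim=> [|y /Pgen_prop //|y z _ [dy [ty yy]] _ [dz [tz yz]]].
  by split; [exact: D20|split; [exact: (Tr0 HTr)|exact: gen0]].
split; [exact: D2B|split; [by rewrite (TrB HTr) // ty tz subrr|exact: genB]].
Qed.

End Main.

Definition Lf g (M : L2 g) : T4 g := \sum_(i < g) \sum_(l < g)
  (if (i < l)%N && (M (lshift g i) (lshift g l) == 1) then c8 i l else 0).

Lemma two_c8 g (i l : 'I_g) : i != l -> gen (@Pgen g) (c8 i l + c8 i l).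
Proof.
move=> h.
have -> : c8 i l + c8 i l = (c7 i l l l + c8 i l) - (c7 i l l l - c8 i l).
  by apply/esym; rewrite opprB addrC addrA subrK.
by apply: genB; apply: genG; do 5 right; exists i, l, l; split => //; [left|right].
Qed.

Lemma F2_10 : ((0 : 'F_2) == 1) = false. Proof. by []. Qed.

Lemma L_sub g (M N : L2 g) : gen (@Pgen g) (Lf M - Lf N - Lf (M - N)).
Proof.
rewrite /Lf -!sumrB; apply: gen_sum => i _; rewrite -!sumrB; apply: gen_sum => l _.
rewrite !mxE; case: ltnP => hil /=; last by rewrite !subr0; exact: gen0.
have ne : i != l by rewrite neq_ltn hil.
case: (F2_cases (M (lshift g i) (lshift g l))) => ->; case: (F2_cases (N (lshift g i) (lshift g l))) => ->;
  rewrite ?subrr ?subr0 ?sub0r ?F2_opp ?eqxx ?F2_10 ?subrr ?subr0 ?sub0r.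
- exact: gen0.
- by rewrite -opprD; apply: gen_opp; exact: two_c8.
- exact: gen0.
- exact: gen0.
Qed.

Lemma L0 g : Lf (0 : L2 g) = 0.
Proof. by rewrite /Lf big1 // => i _; rewrite big1 // => l _; rewrite mxE F2_10 andbF. Qed.

Lemma castb (b : bool) : (((b : nat)%:R : int)%:~R : 'F_2) = (b : nat)%:R.
Proof. by case: b. Qed.

Lemma L_wedge g (i0 l0 : 'I_g) : i0 != l0 -> Lf (wedge (avec i0) (avec l0)) = c8 i0 l0.
Proof.
wlog lt : i0 l0 / (i0 < l0)%N.
  move=> W ne; case: (ltngtP i0 l0) => h; first exact: W.
    by rewrite wedgeC /c8 odotC; apply: W => //; rewrite eq_sym.
  by move: ne; rewrite (ord_inj h) eqxx.
move=> ne.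
have E : forall i l : 'I_g, ((i < l)%N && (wedge (avec i0) (avec l0) (lshift g i) (lshift g l) == 1))
   = (i == i0) && (l == l0).
  move=> i l; rewrite mxE !avecE.
  have e1 : (i0 == l0) = false by apply/negbTE.
  have e2 : (l0 == i0) = false by rewrite eq_sym.
  case: (eqVneq i i0) => [->|ni]; case: (eqVneq l l0) => [->|nl] /=.
  - by rewrite lt !castb e1 e2.
  - by rewrite !castb e1; case: (l == i0); case: (_ < _)%N.
  - by rewrite !castb e2; case: (i == l0); case: (_ < _)%N.
  - case: (eqVneq l i0) => [->|nli]; case: (eqVneq i l0) => [->|nil].
    + by rewrite ltnNge (ltnW lt).
    + by case: (_ < _)%N.
    + by case: (_ < _)%N.
    + by case: (_ < _)%N.
rewrite /Lf; under eq_bigr do under eq_bigr do rewrite E.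
rewrite (bigD1 i0) //= [X in _ + X]big1 ?addr0; last first.
  move=> i hi; apply: big1 => l _; by rewrite (negbTE hi).
rewrite (bigD1 l0) //= !eqxx [X in _ + X]big1 ?addr0 //.
by move=> l hl; rewrite (negbTE hl) andbF.
Qed.

Lemma zid g (y z a b c : T4 g) : (y - z) - c = (y - a) - (z - b) + (a - b - c).
Proof. by apply/ffunP => t; rewrite !ffunE; ring. Qed.

Section Fwd.
Variables (g : nat) (Tr : T4 g -> L2 g) (HTr : is_Tras Tr).

Lemma genP_L x : gen (@Pgen g) x -> gen (@Pgen g) (x - Lf (Tr x)).
Proof.
move=> h; have [_ [t _]] := genP_prop HTr h.
by rewrite t L0 subr0.
Qed.

Lemma lemB (i l : 'I_g) y : i != l -> D2 y -> gen (@Pgen g) (y - c8 i l) ->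
  gen (@Pgen g) (y - Lf (Tr y)).
Proof.
move=> il dy hp; have [d [t _]] := genP_prop HTr hp.
have : Tr ((y - c8 i l) + c8 i l) = wedge (avec i) (avec l).
  by rewrite (TrD HTr d (D2_c8 i l)) t add0r (Tr_c8 HTr).
by rewrite subrK => ->; rewrite L_wedge.
Qed.

Lemma Ygen_L y : Ygen y -> D2 y /\ gen (@Pgen g) (y - Lf (Tr y)).
Proof.
case=> [[i [j [k [l ->]]]]|[[i [j [k [l ->]]]]|[i [j [ij ->]]]]].
- split; first exact: D2_Tel.
  by apply: genP_L; apply: genG; left; exists i, j, k, l.
- split; first exact: D2_c7.
  case: (eqVneq k j) => [->|nkj].
    case: (eqVneq i j) => [->|nij].
      by apply: genP_L; rewrite /c7 Tel_aa; apply: gen0.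
    case: (eqVneq l i) => [->|nli].
      by apply: genP_L; apply: genG; right; right; left; exists i, j.
    apply: (@lemB i l); [by rewrite eq_sym|exact: D2_c7|].
    apply: genG; do 5 right; exists i, j, l; split => //; [by rewrite eq_sym|by right].
  case: (eqVneq k i) => [eki|nki].
    subst k.
    have e : forall l, c7 i j i l = - c7 j i i l by move=> ?; rewrite /c7 Tel_swap.
    case: (eqVneq l j) => [->|nlj].
      rewrite e; apply: genP_L; apply: gen_opp; apply: genG; right; right; left.
      by exists j, i; split => //; rewrite eq_sym.
    apply: (@lemB j l); [by rewrite eq_sym|exact: D2_c7|].
    rewrite e -opprD; apply: gen_opp.
    apply: genG; do 5 right; exists j, i, l; split => //; [by rewrite eq_sym|by rewrite eq_sym|by left].
  case: (eqVneq k l) => [ekl|nkl].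
    subst k.
    have e : c7 i j l l = c7 i l l j - c7 j l l i by rewrite /c7 Tel_jac.
    rewrite e; apply: genP_L; apply: genG; do 3 right; left.
    by exists i, l, j; split => //; [rewrite eq_sym|rewrite eq_sym|right].
  by apply: genP_L; apply: genG; right; left; exists i, j, k, l.
- split; first exact: D2_c8.
  by rewrite (Tr_c8 HTr) L_wedge // subrr; apply: gen0.
Qed.

Lemma Y_L x : Yset x -> D2 x /\ gen (@Pgen g) (x - Lf (Tr x)).
Proof.
elim=> [|y /Ygen_L //|y z _ [dy py] _ [dz pz]].
  by split; [exact: D20|rewrite (Tr0 HTr) L0 subrr; apply: gen0].
split; first exact: D2B.
rewrite (TrB HTr dy dz) (zid _ _ (Lf (Tr y)) (Lf (Tr z))).
by apply: gen_add; [apply: genB|apply: L_sub].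
Qed.
End Fwd.

Unset Implicit Arguments.

Theorem proposition5p7 (g : nat) (hg : (2 <= g)%N) (Tr : T4 g -> L2 g) :
  is_Tras Tr ->
  forall x : T4 g, (Yset x /\ Tr x = 0) <-> gen (@Pgen g) x.
Proof.
move=> HTr x; split.
  move=> [hY h0]; have [_ hL] := Y_L HTr hY.
  by move: hL; rewrite h0 L0 subr0.
by move=> hP; have [_ [t y]] := genP_prop HTr hP.
Qed.
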